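(* Let $\theta_0\in\mathbb{R}$ and let $\hat\theta_u,\hat\theta_b$ be real random variables with finite second moments such that $\mathbb{E}[\hat\theta_u]=\theta_0$ and $\mathbb{E}[\hat\theta_b]=\theta_0+\mu$ for some (arbitrary) $\mu\in\mathbb{R}$. Write $\sigma^2_u=\mathrm{Var}(\hat\theta_u)$, $\sigma^2_b=\mathrm{Var}(\hat\theta_b)$, $\sigma_{bu}=\mathrm{Cov}(\hat\theta_b,\hat\theta_u)$, and assume $\sigma^2_u>0$ and $\sigma^2_u+\sigma^2_b-2\sigma_{bu}>0$. Let $\hat\sigma^2_u,\hat\sigma^2_b,\hat\sigma_{bu}$ be real random variables (on the same probability space) with bounded second moments and satisfying $\hat\sigma^2_u+\hat\sigma^2_b-2\hat\sigma_{bu}>0$ almost surely. Define $$\hat\lambda=\frac{\hat\sigma^2_u-\hat\sigma_{bu}}{(\hat\theta_u-\hat\theta_b)^2+\hat\sigma^2_u+\hat\sigma^2_b-2\hat\sigma_{bu}},\qquad \hat\theta_{\hat\lambda}=\hat\lambda\hat\theta_b+(1-\hat\lambda)\hat\theta_u.$$ Then $$\mathbb{E}\big[(\hat\theta_{\hat\lambda}-\theta_0)^2\big]\le\left(\sigma_u+\frac12\sqrt{\mathbb{E}[S^2]}\right)^2,\qquad\text{where } \mathbb{E}[S^2]=\mathbb{E}\!\left[\frac{(\hat\sigma^2_u-\hat\sigma_{bu})^2}{\hat\sigma^2_u+\hat\sigma^2_b-2\hat\sigma_{bu}}\right].$$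
   Context: $\hat\theta_u$ is an unbiased estimator of $\theta_0$, $\hat\theta_b$ a possibly biased estimator with unknown bias $\mu$, and $\hat\sigma^2_u,\hat\sigma^2_b,\hat\sigma_{bu}$ are estimators of $\mathrm{Var}(\hat\theta_u),\mathrm{Var}(\hat\theta_b),\mathrm{Cov}(\hat\theta_b,\hat\theta_u)$. $\sigma_u=\sqrt{\sigma^2_u}$. *)

(* Defs.v *)
From mathcomp Require Import all_boot all_order all_algebra.
From mathcomp Require Import all_classical all_reals all_analysis.
Set Implicit Arguments. Unset Strict Implicit. Unset Printing Implicit Defensive.
Import Order.TTheory GRing.Theory Num.Theory.
Local Open Scope ring_scope.

Definition lambda_hat (T : Type) (R : realType) (tu tb s2u s2b sbu : T -> R)
  : T -> R :=
  fun w => (s2u w - sbu w) /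
           ((tu w - tb w) ^+ 2 + s2u w + s2b w - 2 * sbu w).

Definition theta_lambda (T : Type) (R : realType) (tu tb s2u s2b sbu : T -> R)
  : T -> R :=
  fun w => lambda_hat tu tb s2u s2b sbu w * tb w
           + (1 - lambda_hat tu tb s2u s2b sbu w) * tu w.

Definition S2 (T : Type) (R : realType) (s2u s2b sbu : T -> R) : T -> R :=
  fun w => (s2u w - sbu w) ^+ 2 / (s2u w + s2b w - 2 * sbu w).

(* Main.v *)
Require Import Defs.
From mathcomp Require Import all_boot all_order all_algebra.
From mathcomp Require Import all_classical all_reals all_analysis.
From mathcomp Require Import ring lra measurable_realfun.
Import Order.TTheory GRing.Theory Num.Theory.
Local Open Scope ring_scope.

Lemma inv_meas (R : realType) : measurable_fun [set: R] (@GRing.inv R).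
Proof.
have mD : measurable (~` [set (0:R)]) by apply: measurableC.
have : measurable_fun (~` [set (0:R)]) (@GRing.inv R).
  apply: measurable_realfun.open_continuous_measurable_fun.
    apply: closed_openC; apply: accessible_closed_set1.
    exact: hausdorff_accessible.
  move=> x; idtac; rewrite ?inE /= => x0; apply: inv_continuous; exact/eqP.
move/(measurable_restrictT _ mD).
move=> H; apply: eq_measurable_fun H => x _; rewrite patchE.
case: ifPn => //; rewrite notin_setE /= => x0.
have -> : x = 0 by apply: contrapT.
by rewrite invr0.
Qed.

Lemma core (R : realFieldType) (tu tb s2u s2b sbu th0 t : R) :
  0 < s2u + s2b - 2 * sbu -> 0 < t ->
  ((s2u - sbu) / ((tu - tb) ^+ 2 + s2u + s2b - 2 * sbu) * tb +
   (1 - (s2u - sbu) / ((tu - tb) ^+ 2 + s2u + s2b - 2 * sbu)) * tu - th0) ^+ 2 <=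
  (1 + t) * (tu - th0) ^+ 2 +
  ((1 + t^-1) / 4) * ((s2u - sbu) ^+ 2 / (s2u + s2b - 2 * sbu)).
Proof.
move=> B0 t0.
set lam := (s2u - sbu) / _.
set B := s2u + s2b - 2 * sbu in B0 *.
set A := s2u - sbu.
set D := tu - tb.
set e := tu - th0.
have N0 : 0 < D ^+ 2 + B by apply: ltr_wpDl; [exact: sqr_ge0|].
have lamE : lam = A / (D ^+ 2 + B) by rewrite /lam /B /D; congr (_ / _); ring.
have -> : lam * tb + (1 - lam) * tu - th0 = e - lam * D by rewrite /e /D; ring.
set y := lam * D.
have h1 : y ^+ 2 <= A ^+ 2 / (4 * B).
  rewrite -subr_ge0.
  have -> : A ^+ 2 / (4 * B) - y ^+ 2 =
     A ^+ 2 * (D ^+ 2 - B) ^+ 2 / (4 * B * (D ^+ 2 + B) ^+ 2).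
    rewrite /y lamE; field.
    by apply/andP; split; rewrite lt0r_neq0.
  apply: divr_ge0; first by apply: mulr_ge0; exact: sqr_ge0.
  by apply: mulr_ge0; [lra|exact: sqr_ge0].
have h2 : (e - y) ^+ 2 <= (1 + t) * e ^+ 2 + (1 + t^-1) * y ^+ 2.
  rewrite -subr_ge0.
  have -> : (1 + t) * e ^+ 2 + (1 + t^-1) * y ^+ 2 - (e - y) ^+ 2 =
      t^-1 * (t * e + y) ^+ 2.
    by field; rewrite lt0r_neq0.
  by apply: mulr_ge0; [rewrite invr_ge0 ltW|exact: sqr_ge0].
apply: (le_trans h2); rewrite lerD2l.
have -> : (1 + t^-1) / 4 * (A ^+ 2 / B) = (1 + t^-1) * (A ^+ 2 / (4 * B)).
  by field; rewrite !lt0r_neq0.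
apply: ler_wpM2l => //.
by apply: addr_ge0 => //; rewrite invr_ge0 ltW.
Qed.

Lemma fin_real (R : realType) (v c l : R) : 0 < v -> 0 <= c ->
  (forall t, 0 < t -> l <= (1 + t) * v + ((1 + t^-1) / 4) * c) ->
  l <= (Num.sqrt v + 2^-1 * Num.sqrt c) ^+ 2.
Proof.
move=> v0 c0 H.
set a := Num.sqrt v; set s := Num.sqrt c.
have a0 : 0 < a by rewrite sqrtr_gt0.
have s0 : 0 <= s by exact: sqrtr_ge0.
have va : v = a ^+ 2 by rewrite sqr_sqrtr // ltW.
have cs : c = s ^+ 2 by rewrite sqr_sqrtr.
rewrite va cs in H.
have [sp|] := ltP 0 s.
  have tp : 0 < s / (2 * a) by apply: divr_gt0 => //; apply: mulr_gt0.
  have := H _ tp.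
  move/le_trans; apply; rewrite le_eqVlt; apply/orP; left.
  by apply/eqP; field; rewrite !lt0r_neq0.
move=> sle; have sE : s = 0 by apply/le_anti; rewrite sle s0.
rewrite sE in H *; rewrite mulr0 addr0.
rewrite leNgt; apply/negP => la.
have tp : 0 < (l - a ^+ 2) / (2 * a ^+ 2).
  by apply: divr_gt0; [rewrite subr_gt0|apply: mulr_gt0 => //; exact: exprn_gt0].
have := H _ tp; rewrite expr0n /= mulr0 addr0.
have -> : (1 + (l - a ^+ 2) / (2 * a ^+ 2)) * a ^+ 2 = (l + a ^+ 2) / 2.
  by field; rewrite lt0r_neq0 // exprn_gt0.
rewrite ler_pdivlMr //; lra.
Qed.
Local Open Scope ereal_scope.

Theorem theorem3 (d : measure_display) (T : measurableType d) (R : realType)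
  (P : probability T R) (theta0 mu : R)
  (tu tb s2u s2b sbu : T -> R) :
  tu \in Lfun P 2%:E -> tb \in Lfun P 2%:E ->
  'E_P[tu] = theta0%:E ->
  'E_P[tb] = (theta0 + mu)%:E ->
  0 < 'V_P[tu] ->
  0 < 'V_P[tu] + 'V_P[tb] - 2%:E * covariance P tb tu ->
  s2u \in Lfun P 2%:E -> s2b \in Lfun P 2%:E -> sbu \in Lfun P 2%:E ->
  {ae P, forall w, (0 < s2u w + s2b w - 2 * sbu w)%R} ->
  'E_P[(fun w => (theta_lambda tu tb s2u s2b sbu w - theta0) ^+ 2)%R]
    <= (sqrte 'V_P[tu] + 2^-1%:E * sqrte 'E_P[S2 s2u s2b sbu]) ^+ 2.
Proof.
move=> Ltu Ltb Etu _ V0 _ Ls2u Ls2b Lsbu Hae.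
have mL : forall f : T -> R, f \in Lfun P 2%:E -> measurable_fun setT f.
  by move=> f /sub_Lfun_mfun; rewrite inE.
have mtu := mL _ Ltu; have mtb := mL _ Ltb; have ms2u := mL _ Ls2u.
have ms2b := mL _ Ls2b; have msbu := mL _ Lsbu.
have EE : forall X : T -> R, 'E_P[X] = \int[P]_w (X w)%:E by move=> X; rewrite unlock.
have mB : measurable_fun setT (fun w => s2u w + s2b w - 2 * sbu w)%R.
  apply: measurable_funB; first exact: measurable_funD.
  by apply: measurable_funM => //; exact: measurable_cst.
have mA : measurable_fun setT (fun w => s2u w - sbu w)%R by exact: measurable_funB.
have mlam : measurable_fun setT (lambda_hat tu tb s2u s2b sbu).
  apply: measurable_funM => //; apply: measurableT_comp; first exact: inv_meas.
  apply: measurable_funB; last by apply: measurable_funM => //; exact: measurable_cst.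
  apply: measurable_funD => //; apply: measurable_funD => //.
  by apply: measurable_funX; exact: measurable_funB.
have mF : measurable_fun setT (fun w => (theta_lambda tu tb s2u s2b sbu w - theta0) ^+ 2)%R.
  apply: measurable_funX; apply: measurable_funB; last exact: measurable_cst.
  apply: measurable_funD; first exact: measurable_funM.
  apply: measurable_funM => //; apply: measurable_funB => //; exact: measurable_cst.
have mS2 : measurable_fun setT (S2 s2u s2b sbu).
  apply: measurable_funM; first exact: measurable_funX.
  by apply: measurableT_comp; first exact: inv_meas.
set h := fun w => Num.max (S2 s2u s2b sbu w) 0%R.
have mh : measurable_fun setT h by apply: measurable_maxr => //; exact: measurable_cst.
set g := fun w => ((tu w - theta0) ^+ 2)%R.
have mg : measurable_fun setT g.
  by apply: measurable_funX; apply: measurable_funB => //; exact: measurable_cst.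
set F := (fun w => (theta_lambda tu tb s2u s2b sbu w - theta0) ^+ 2)%R.
have Eg : 'E_P[g] = 'V_P[tu].
  rewrite /variance covariance.unlock Etu /=.
  by congr expectation; apply/funext => w; rewrite /g expr2.
set v := fine 'V_P[tu].
have VE : 'V_P[tu] = v%:E by rewrite fineK // variance_fin_num.
have v0 : (0 < v)%R by rewrite -lte_fin -VE.
have g0 : forall w, (0 <= g w)%R by move=> w; exact: sqr_ge0.
have h0 : forall w, (0 <= h w)%R by move=> w; rewrite /h le_max lexx orbT.
have bound : forall t, (0 < t)%R ->
    'E_P[F] <= ((1 + t) * v)%:E + ((1 + t^-1) / 4)%:E * \int[P]_w (h w)%:E.
  move=> t t0.
  have k0 : (0 <= (1 + t^-1) / 4 :> R)%R.
    by apply: divr_ge0 => //; apply: addr_ge0 => //; rewrite invr_ge0 ltW.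
  rewrite EE.
  apply: (@le_trans _ _ (\int[P]_w ((1 + t)%:E * (g w)%:E + ((1 + t^-1) / 4)%:E * (h w)%:E))).
    apply: ae_ge0_le_integral => //.
    - by move=> w _; rewrite lee_fin; exact: sqr_ge0.
    - exact: measurableT_comp.
    - move=> w _; apply: adde_ge0; apply: mule_ge0; rewrite lee_fin //.
      by apply: addr_ge0 => //; exact: ltW.
    - apply: emeasurable_funD; apply: emeasurable_funM => //;
        exact: measurableT_comp.
    - apply: filterS Hae => w Bw _.
      rewrite -!EFinM -EFinD lee_fin /F /theta_lambda /lambda_hat.
      apply: (le_trans (@core _ (tu w) (tb w) _ _ _ theta0 _ Bw t0)).
      rewrite lerD2l; apply: ler_wpM2l => //.
      by rewrite /h le_max lexx.
  rewrite ge0_integralD //; try (by move=> w _; apply: mule_ge0; rewrite lee_fin //; apply: addr_ge0 => //; exact: ltW);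
    try (by apply: emeasurable_funM => //; exact: measurableT_comp).
  rewrite ge0_integralZl_EFin //; try (by move=> w _; rewrite lee_fin);
    try exact: measurableT_comp; try (by apply: addr_ge0 => //; exact: ltW).
  rewrite ge0_integralZl_EFin //; try (by move=> w _; rewrite lee_fin);
    try exact: measurableT_comp.
  by rewrite -EE Eg VE -EFinM.
have ES : 'E_P[S2 s2u s2b sbu] = \int[P]_w (h w)%:E.
  rewrite EE; apply: ae_eq_integral => //; try exact: measurableT_comp.
  apply: filterS Hae => w Bw _; congr EFin; rewrite /h max_l //.
  by rewrite /S2; apply: divr_ge0; [exact: sqr_ge0|exact: ltW].
have EF0 : 0 <= 'E_P[F] by apply: expectation_ge0 => w; exact: sqr_ge0.
have H0 : 0 <= \int[P]_w (h w)%:E by apply: integral_ge0 => w _; rewrite lee_fin.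
rewrite ES VE /=.
case Hh : (\int[P]_w (h w)%:E) H0 bound => [c| |] H0 bound.
- have c0 : (0 <= c)%R by rewrite -lee_fin.
  case EFc : 'E_P[F] EF0 bound => [l| |] EF0 bound.
  + have -> : sqrte c%:E = (Num.sqrt c)%:E by [].
    rewrite -EFinM lee_fin -expr2.
    by apply: fin_real.
  + by have := bound 1%R ltr01; rewrite leye_eq.
  + exact: leNye.
- rewrite /= gt0_muley ?lte_fin ?invr_gt0 // addey // mulyy.
  exact: leey.
- by rewrite leeNy_eq in H0.
Qed.
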